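(* Let $G$ be a connected graph with $n\ge 2$ vertices and let $k$ be an integer. The following statements are equivalent: (1) there is a GS ordering of $G$ whose $\mathcal{F}$-tree has at most $k$ leaves; (2) there is a $Z^*$-forcing set of $G$ of size at most $k$; (3) there is a generic $Z$-sequence of $G$ of length at least $n-k$.
   Context: All graphs are finite, simple, undirected, connected and non-empty; $N(v)$ is the open and $N[v]=N(v)\cup\{v\}$ the closed neighborhood. A GS ordering of $G$ is an ordering $(v_1,\dots,v_n)$ of $V(G)$ such that every $v_i$ with $i>1$ has a neighbor among $v_1,\dots,v_{i-1}$. Its $\mathcal{F}$-tree is the spanning tree rooted at $v_1$ where the parent of $v_i$ ($i>1$) is its leftmost neighbor in the ordering; a leaf is a non-root vertex without children (the root is never a leaf). A generic $Z$-sequence of $G$ is a sequence $(v_1,\dots,v_\ell)$ of distinct vertices that is a prefix of some GS ordering of $G$ and satisfies $N(v_i)\setminus\bigcup_{j=1}^{i-1}N[v_j]\neq\emptyset$ for all $i\in\{1,\dots,\ell\}$. $Z^*$-rule: if $v$ is a blue vertex that has exactly one white neighbor $w$, and either $w$ is the only white vertex of $G$ or $w$ has at least one white neighbor, then $w$ may be colored blue. A set $S\subseteq V(G)$ is a $Z^*$-forcing set if, coloring $S$ blue and all other vertices white and then iteratively applying the $Z^*$-rule, all vertices of $G$ can be colored blue. *)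

(* Defs.v *)
From mathcomp Require Import all_boot all_order all_algebra.
Set Implicit Arguments. Unset Strict Implicit. Unset Printing Implicit Defensive.

Definition simple_graph (T : finType) (e : rel T) : Prop :=
  symmetric e /\ irreflexive e.

Definition connected_graph (T : finType) (e : rel T) : Prop :=
  forall x y : T, connect e x y.

Section Defs.
Variables (T : finType) (e : rel T).

Definition earlier_neighbor (s : seq T) : Prop :=
  forall (p : seq T) (v : T) (q : seq T), s = p ++ v :: q -> p != [::] -> has (e v) p.

Definition GS_ordering (s : seq T) : Prop :=
  [/\ uniq s, (forall v : T, v \in s) & earlier_neighbor s].

Definition F_parent (s : seq T) (w : T) : T := nth w s (find (e w) s).

(* Leaves of the F-tree: non-root vertices (entries of behead s) that are
   the parent of no non-root vertex. *)
Definition F_leaves (s : seq T) : {set T} :=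
  [set v | (v \in behead s) && ~~ has (fun w => F_parent s w == v) (behead s)].

Definition zstar_force (B : {set T}) (v w : T) : bool :=
  [&& v \in B, w \notin B, e v w,
      [forall u, (e v u && (u \notin B)) ==> (u == w)] &
      ((~: B == [set w]) || [exists u, e w u && (u \notin B)])].

Inductive zstar_reach (S : {set T}) : {set T} -> Prop :=
| zr_init : zstar_reach S S
| zr_step (B : {set T}) (v w : T) :
    zstar_reach S B -> zstar_force B v w -> zstar_reach S (w |: B).

Definition zstar_forcing_set (S : {set T}) : Prop := zstar_reach S [set: T].

Definition generic_Z_sequence (s : seq T) : Prop :=
  [/\ uniq s,
      (exists t : seq T, GS_ordering t /\ prefix s t) &
      (forall (p : seq T) (v : T) (q : seq T), s = p ++ v :: q ->
         exists u : T, e v u /\ (forall x, x \in p -> (u != x) && ~~ e x u))].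

End Defs.

(* Main.v *)
Require Import Defs.
From mathcomp Require Import all_boot all_order all_algebra.
From mathcomp Require Import zify.
Import Order.TTheory GRing.Theory Num.Theory.

Set Implicit Arguments. Unset Strict Implicit. Unset Printing Implicit Defensive.

Section Proof.
Variables (T : finType) (e : rel T).
Hypothesis esymm : symmetric e.
Hypothesis eirr : irreflexive e.
Hypothesis econn : connected_graph e.

Definition gencond (s : seq T) := forall (p : seq T) (v : T) (q : seq T), s = p ++ v :: q ->
         exists u : T, e v u /\ (forall x, x \in p -> (u != x) && ~~ e x u).

Lemma rcons_split (s : seq T) w p v q :
  rcons s w = p ++ v :: q ->
  (q = [::] /\ p = s /\ v = w) \/ (exists q', q = rcons q' w /\ s = p ++ v :: q').
Proof.
case/lastP: q => [|q' x].
  rewrite cats1 => /rcons_inj [-> ->]. by left.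
rewrite -rcons_cons -rcons_cat => /rcons_inj [-> ->]. right; by exists q'.
Qed.

Lemma EN_rcons (s : seq T) w : earlier_neighbor e s -> (s != [::] -> has (e w) s) ->
  earlier_neighbor e (rcons s w).
Proof.
move=> Hs Hw p v q /rcons_split [[_ [-> ->]]|[q' [_ Hq]]]; [exact: Hw | exact: Hs Hq].
Qed.

Lemma EN_nil : earlier_neighbor e [::].
Proof. by move=> [|a p] v q H; discriminate H. Qed.

Lemma closed_last (s : seq T) : (forall z x, z \in s -> e z x -> x \in s) ->
  forall p z, z \in s -> path e z p -> last z p \in s.
Proof. move=> Hc; elim=> [|y p IH] z Hz //= /andP [Hzy Hp]. apply: IH Hp. exact: Hc Hzy. Qed.

Lemma cross_edge (s : seq T) y z0 : z0 \in s -> y \notin s ->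
  exists z x, [/\ z \in s, e z x & x \notin s].
Proof.
move=> Hz0 Hy.
case: (boolP [exists z, exists x, [&& z \in s, e z x & x \notin s]]).
  case/existsP=> z /existsP [x /and3P [H1 H2 H3]]; by exists z, x.
rewrite negb_exists => /forallP H.
have Hc : forall z x, z \in s -> e z x -> x \in s.
  move=> z x Hz Hzx; move: (H z); rewrite negb_exists => /forallP /(_ x).
  by rewrite Hz Hzx /= negbK.
case/connectP: (econn z0 y) => p Hp Hl.
by move: (closed_last Hc Hz0 Hp); rewrite -Hl (negbTE Hy).
Qed.

Lemma grow (s : seq T) : uniq s -> earlier_neighbor e s -> s != [::] -> ~~ [forall x, x \in s] ->
  exists x, [/\ uniq (rcons s x), earlier_neighbor e (rcons s x) & size s < #|T|].
Proof.
move=> Hu Hen Hne; rewrite negb_forall => /existsP [y Hy].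
case: s Hne Hu Hen Hy => [//|z0 s'] _ Hu Hen Hy.
have [z [x [Hz Hzx Hx]]] := cross_edge (mem_head z0 s') Hy.
have Hu' : uniq (rcons (z0 :: s') x) by rewrite rcons_uniq Hx Hu.
exists x; split => //.
  apply: EN_rcons => // _; apply/hasP; exists z => //; by rewrite esymm.
move/card_uniqP: Hu'; rewrite size_rcons => <-; exact: max_card.
Qed.

Lemma extend_GS m (s : seq T) : #|T| - size s <= m -> uniq s -> earlier_neighbor e s -> s != [::] ->
  exists t, GS_ordering e t /\ prefix s t.
Proof.
elim: m s => [|m IH] s Hm Hu Hen Hne.
  case: (boolP [forall x, x \in s]) => [/forallP Hall|Hn].
    by exists s; split; [split|exact: prefix_refl].
  have [x [_ _ Hlt]] := grow Hu Hen Hne Hn. lia.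
case: (boolP [forall x, x \in s]) => [/forallP Hall|Hn].
  by exists s; split; [split|exact: prefix_refl].
have [x [Hu' Hen' Hlt]] := grow Hu Hen Hne Hn.
have Hne' : rcons s x != [::] by rewrite -size_eq0 size_rcons.
have Hm' : #|T| - size (rcons s x) <= m by rewrite size_rcons; lia.
have [t [Ht Hp]] := IH (rcons s x) Hm' Hu' Hen' Hne'.
exists t; split => //.
case/prefixP: Hp => r ->; apply/prefixP; exists (x :: r); by rewrite cat_rcons.
Qed.

Lemma gen_not_leaf t s : GS_ordering e t -> prefix s t -> gencond s ->
  forall v, v \in s -> v \notin F_leaves e t.
Proof.
move=> Ht /prefixP [r Htr] Hg v Hv; subst t; case: Ht => Hu Hall Hen.
case/splitPr: Hv Hg Hu Hall Hen => p q Hg Hu Hall Hen.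
have [u [Hvu Hux]] := Hg p v q erefl.
have Hub : u \in behead ((p ++ v :: q) ++ r).
  move: (Hall u) Hux; clear Hg Hu Hen Hall.
  case: p => [|x p'] Hut Hux; rewrite /= in Hut *.
  - move: Hut; rewrite in_cons => /orP [/eqP Huv|//]. by move: Hvu; rewrite Huv eirr.
  - move: Hut; rewrite in_cons => /orP [/eqP Hux0|//].
    by move: (Hux x (mem_head _ _)); rewrite Hux0 eqxx.
have Hpar : F_parent e ((p ++ v :: q) ++ r) u = v.
  rewrite /F_parent -catA find_cat.
  have -> : has (e u) p = false.
    apply/negbTE/hasPn => x Hx; rewrite esymm; by case/andP: (Hux x Hx).
  rewrite /= (esymm u v) Hvu addn0 nth_cat ltnn subnn. done.
rewrite inE negb_and; apply/orP; right; rewrite negbK; apply/hasP; exists u => //.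
by rewrite Hpar.
Qed.

Lemma leaves_bound t s : GS_ordering e t -> prefix s t -> uniq s -> gencond s ->
  #|F_leaves e t| + size s <= #|T|.
Proof.
move=> Ht Hp Hu Hg.
have Hsub : F_leaves e t \subset ~: [set x in s].
  apply/subsetP => x Hx; rewrite !inE; apply/negP => Hxs.
  by move: (gen_not_leaf Ht Hp Hg Hxs); rewrite Hx.
have H1 := subset_leq_card Hsub.
have H2 := cardsC [set x in s].
have H3 : #|[set x in s]| = size s by rewrite cardsE; apply/card_uniqP.
lia.
Qed.


Lemma mem_drop_idx (t : seq T) x m : uniq t -> x \in t -> (x \in drop m t) = (m <= index x t).
Proof.
move=> Hu Hx; have Hix : index x t < size t by rewrite index_mem.
apply/idP/idP => [Hd|Hm].
  have Hj : index x (drop m t) < size (drop m t) by rewrite index_mem.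
  have := nth_index x Hd; rewrite nth_drop => Hn.
  have : index (nth x t (m + index x (drop m t))) t = m + index x (drop m t).
    apply: index_uniq => //; move: Hj; rewrite size_drop; by rewrite ltn_subRL.
  rewrite Hn => ->; exact: leq_addr.
rewrite -(nth_index x Hx) -(subnKC Hm) -nth_drop.
apply: mem_nth; rewrite size_drop; apply: ltn_sub2r => //; exact: leq_ltn_trans Hm Hix.
Qed.

Lemma mem_behead_t (t : seq T) c : c \in behead t -> c \in t.
Proof. by case: t => //= x t' H; rewrite in_cons H orbT. Qed.

Lemma en_idx t c : GS_ordering e t -> c \in behead t -> find (e c) t < index c t.
Proof.
case=> Hu Hall Hen Hc.
have Hct : c \in t := mem_behead_t Hc.
have Hi0 : 0 < index c t.
  case: t Hu Hc {Hall Hen Hct} => //= x t' /andP [Hx _] Hc.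
  rewrite /index /=; case: eqP => [Hxc|//].
  by move: Hx; rewrite Hxc Hc.
have Hdec : t = take (index c t) t ++ c :: drop (index c t).+1 t.
  by rewrite -{1}(cat_take_drop (index c t) t) (drop_nth c) ?index_mem // nth_index.
have Hsz : size (take (index c t) t) = index c t.
  by apply: size_takel; apply: ltnW; rewrite index_mem.
have Hne : take (index c t) t != [::] by rewrite -size_eq0 Hsz -lt0n.
have Hh := Hen _ _ _ Hdec Hne.
rewrite -{1}(cat_take_drop (index c t) t) find_cat Hh.
by move: Hh; rewrite has_find Hsz.
Qed.

Lemma leaves_forcing (x0 : T) t : GS_ordering e t -> (forall x, exists y, e x y) ->
  zstar_forcing_set e (F_leaves e t).
Proof.
move=> Ht Hnb; have [Hu Hall Hen] := Ht.
have F2 : forall v, v \in behead t -> v \notin F_leaves e t ->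
    exists c, c \in behead t /\ F_parent e t c = v.
  move=> v Hv; rewrite inE Hv /= negbK => /hasP [c Hc /eqP Hpc]; by exists c.
have F3 : forall c, c \in behead t -> F_parent e t c \notin F_leaves e t.
  move=> c Hc; rewrite inE; apply/negP => /andP [_ /hasPn H].
  by move: (H c Hc); rewrite eqxx.
have F1 : forall x, x \in F_leaves e t -> x \in behead t.
  by move=> x; rewrite inE => /andP [].
have Hbeh : behead t = drop 1 t by rewrite drop1.
set S := F_leaves e t in F1 F2 F3 *.
clearbody S.
pose B i := S :|: [set x | x \in drop i t].
have memB : forall j x, (x \in B j) = (x \in S) || (x \in drop j t).
  by move=> j x; rewrite /B in_setU in_set.
have HB0 : B 0 = setT by apply/setP => x; rewrite memB drop0 Hall orbT in_setT.
suff : forall m i, i + m = size t -> zstar_reach e S (B i).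
  by move/(_ (size t) 0 erefl); rewrite HB0.
elim=> [|m IH] i Him.
  have Hd : drop i t = [::] by apply/eqP; rewrite -size_eq0 size_drop -Him addn0 subnn.
  have -> : B i = S by apply/setP => x; rewrite memB Hd in_nil orbF.
  exact: zr_init.
have Hi : i < size t by lia.
have IH' := IH i.+1 ltac:(lia).
set v := nth x0 t i.
have Hdrop : drop i t = v :: drop i.+1 t := drop_nth x0 Hi.
have Hidx : index v t = i := index_uniq x0 Hi Hu.
have Hvt : v \in t := mem_nth x0 Hi.
case: (boolP (v \in S)) => HvS.
  have -> : B i = B i.+1.
    apply/setP => x; rewrite !memB Hdrop in_cons.
    by case: (x =P v) => [->|] //=; rewrite HvS.
  exact: IH'.
have Hvdrop : v \notin drop i.+1 t by rewrite mem_drop_idx // Hidx ltnn.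
have Hvbeh : 0 < i -> v \in behead t by move=> Hi0; rewrite Hbeh mem_drop_idx // Hidx.
have [c [Hc Hpc]] : exists c, c \in behead t /\ F_parent e t c = v.
  have [Hi0|Hi0] := posnP i; last exact: F2 v (Hvbeh Hi0) HvS.
  have [y Hvy] := Hnb v.
  have Ht0 : t = v :: drop 1 t by move: Hdrop; rewrite Hi0 drop0.
  exists y; split.
    rewrite Hbeh; move: (Hall y); rewrite {1}Ht0 in_cons => /orP [/eqP Hyv|//].
    by move: Hvy; rewrite Hyv eirr.
  by rewrite /F_parent Ht0 /= (esymm y v) Hvy.
have Hct : c \in t := mem_behead_t Hc.
have Hflt := en_idx Ht Hc.
have Hfsz : find (e c) t < size t by apply: (leq_trans Hflt); apply: ltnW; rewrite index_mem.
have Hf : find (e c) t = i.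
  rewrite -Hidx -Hpc /F_parent (set_nth_default x0) //.
  by rewrite index_uniq.
have Hcdrop : c \in drop i.+1 t by rewrite mem_drop_idx // -Hf.
have Hecv : e c v.
  have Hh : has (e c) t by rewrite has_find.
  by have := nth_find x0 Hh; rewrite Hf.
have Hforce : zstar_force e (B i.+1) c v.
  apply/and5P; split.
  - by rewrite memB Hcdrop orbT.
  - by rewrite memB negb_or HvS Hvdrop.
  - exact: Hecv.
  - apply/forallP => u; apply/implyP => /andP [Heu].
    rewrite memB negb_or => /andP [_ Hud].
    have Hut := Hall u.
    move: Hud; rewrite mem_drop_idx // -ltnNge ltnS => Hui.
    have Hfu : find (e c) t <= index u t.
      rewrite leqNgt; apply/negP => Hlt.
      by move: (before_find x0 Hlt); rewrite nth_index // Heu.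
    have Hiu : index u t = i by lia.
    by rewrite -(nth_index x0 Hut) Hiu.
  - have [Hi0|Hi0] := posnP i.
      apply/orP; left; apply/eqP/setP => x; rewrite in_setC in_set1 memB.
      case: (x =P v) => [->|Hxv]; first by rewrite negb_or HvS Hvdrop.
      have Hx0 : index x t != 0.
        apply/eqP => H0; apply: Hxv; by rewrite -(nth_index x0 (Hall x)) H0 /v Hi0.
      by rewrite Hi0 mem_drop_idx ?Hall // lt0n Hx0 orbT.
    apply/orP; right; apply/existsP.
    have Hvb := Hvbeh Hi0.
    have Hfv := en_idx Ht Hvb.
    have Hfvsz : find (e v) t < size t by lia.
    exists (nth x0 t (find (e v) t)); apply/andP; split.
      by apply: nth_find; rewrite has_find.
    rewrite memB negb_or; apply/andP; split.
      have := F3 v Hvb; by rewrite /F_parent (set_nth_default x0).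
    by rewrite mem_drop_idx ?mem_nth // index_uniq //; lia.
have -> : B i = v |: B i.+1.
  apply/setP => x; rewrite in_setU1 !memB Hdrop in_cons.
  by rewrite orbCA.
exact: zr_step IH' Hforce.
Qed.

Fixpoint fvalid (B : {set T}) (l : seq (T * T)) : bool :=
  if l is (v, w) :: l' then zstar_force e B v w && fvalid (w |: B) l' else true.
Definition fset (B : {set T}) (l : seq (T * T)) := foldl (fun B p => p.2 |: B) B l.

Lemma fvalid_rcons B l x : fvalid B (rcons l x) = fvalid B l && zstar_force e (fset B l) x.1 x.2.
Proof.
elim: l B => [|[v w] l IH] B /=; first by case: x => v w /=; rewrite andbT.
by rewrite IH andbA.
Qed.

Lemma fset_rcons B l x : fset B (rcons l x) = x.2 |: fset B l.
Proof. by rewrite /fset foldl_rcons. Qed.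

Lemma reach_valid S B : zstar_reach e S B -> exists l, fvalid S l /\ fset S l = B.
Proof.
elim=> [|B' v w _ [l [Hl HB]] Hf]; first by exists [::].
exists (rcons l (v, w)); split; first by rewrite fvalid_rcons Hl HB.
by rewrite fset_rcons HB.
Qed.

Lemma force_seq l B : fvalid B l -> fset B l = setT ->
  [/\ uniq (rev (map snd l)), forall x, (x \in rev (map snd l)) = (x \notin B),
      earlier_neighbor e (rev (map snd l)) & gencond (rev (map snd l))].
Proof.
elim: l B => [|[v w] l IH] B /=.
  move=> _ ->; split => //.
  - by move=> x; rewrite in_setT.
  - by move=> [|a p] v q H; discriminate H.
  - by move=> [|a p] v q H; discriminate H.
move=> /andP [Hf Hl] Hset.
have [Hu Hmem Hen Hg] := IH _ Hl Hset.
rewrite rev_cons.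
case/and5P: Hf => HvB HwB Hvw Hall Hcond.
have Hw : w \notin rev (map snd l) by rewrite Hmem setU11.
split.
- by rewrite rcons_uniq Hw Hu.
- move=> x; rewrite mem_rcons in_cons Hmem in_setU1.
  case: (x =P w) => [->|] //=.
- apply: EN_rcons => // Hne.
  case/orP: Hcond => [/eqP HB|/existsP [u /andP [Hwu HuB]]].
  + move: Hne Hmem; case: (rev (map snd l)) => [//|x s'] _ Hmem'.
    have := Hmem' x; rewrite mem_head in_setU1 => /esym /norP [Hxw HxB].
    have : x \in ~: B by rewrite in_setC.
    by rewrite HB in_set1 (negbTE Hxw).
  + apply/hasP; exists u => //; rewrite Hmem in_setU1 negb_or HuB andbT.
    apply/eqP => Huw; by move: Hwu; rewrite Huw eirr.
- move=> p u q /rcons_split [[_ [Hp Hu']]|[q' [_ Hs]]]; last exact: Hg Hs.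
  subst p u; exists v; split; first by rewrite esymm.
  move=> x Hx; move: (Hmem x); rewrite Hx in_setU1 => /esym /norP [Hxw HxB].
  apply/andP; split.
    by apply/eqP => Hvx; move: HxB; rewrite -Hvx HvB.
  rewrite esymm; apply/negP => Hvx.
  move/forallP: Hall => /(_ x); rewrite Hvx HxB /= => /eqP Hxw'.
  by move: Hxw; rewrite Hxw' eqxx.
Qed.

Lemma forcing_gen (x0 : T) S : zstar_forcing_set e S ->
  exists s, generic_Z_sequence e s /\ size s + #|S| = #|T|.
Proof.
move=> /reach_valid [l [Hl Hset]].
have [Hu Hmem Hen Hg] := force_seq Hl Hset.
set s := rev (map snd l) in Hu Hmem Hen Hg *.
clearbody s.
exists s; split.
  split => //.
  case: (boolP (s == [::])) => [/eqP Hs0|Hne].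
    have Hu1 : uniq [:: x0] by [].
    have Hen1 : earlier_neighbor e [:: x0] by apply: (@EN_rcons [::]) => //; exact: EN_nil.
    have [t [Ht _]] := @extend_GS #|T| [:: x0] (leq_subr _ _) Hu1 Hen1 isT.
    exists t; split; first exact: Ht. by apply/prefixP; exists t; rewrite Hs0.
  exact: (@extend_GS #|T| s (leq_subr _ _) Hu Hen Hne).
have H1 : #|s| = size s by apply/card_uniqP.
have H2 : #|s| = #|~: S| by apply: eq_card => x; rewrite Hmem in_setC.
have H3 := cardsC S.
lia.
Qed.

End Proof.

Theorem theorem3p10 (T : finType) (e : rel T) (k : int) :
  simple_graph e -> connected_graph e -> (2 <= #|T|)%N ->
  [/\ ((exists s : seq T, GS_ordering e s /\ (#|F_leaves e s|%:Z <= k)%R) <->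
       (exists S : {set T}, zstar_forcing_set e S /\ (#|S|%:Z <= k)%R)),
      ((exists S : {set T}, zstar_forcing_set e S /\ (#|S|%:Z <= k)%R) <->
       (exists s : seq T, generic_Z_sequence e s /\ (#|T|%:Z - k <= (size s)%:Z)%R)) &
      ((exists s : seq T, GS_ordering e s /\ (#|F_leaves e s|%:Z <= k)%R) <->
       (exists s : seq T, generic_Z_sequence e s /\ (#|T|%:Z - k <= (size s)%:Z)%R))].
Proof.
move=> [Hsym Hirr] Hconn HT.
have /card_gt0P [x0 _] : (0 < #|T|)%N by lia.
have Hnb : forall x : T, exists y, e x y.
  move=> x.
  have [y Hyx] : exists y, y != x.
    apply/existsP; apply: contraTT HT => /existsPn H.
    rewrite -ltnNge ltnS -(card1 x); apply: subset_leq_card; apply/subsetP => z _.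
    by rewrite inE; move: (H z); rewrite negbK.
  case/connectP: (Hconn x y) => [[|z p] /= Hp Hl]; first by move: Hyx; rewrite Hl eqxx.
  by case/andP: Hp => Hxz _; exists z.
have AB : (exists s : seq T, GS_ordering e s /\ (#|F_leaves e s|%:Z <= k)%R) ->
          (exists S : {set T}, zstar_forcing_set e S /\ (#|S|%:Z <= k)%R).
  move=> [t [Ht Hk]]; exists (F_leaves e t); split => //.
  have := leaves_forcing Hsym Hirr x0 Ht Hnb. done.
have BC : (exists S : {set T}, zstar_forcing_set e S /\ (#|S|%:Z <= k)%R) ->
          (exists s : seq T, generic_Z_sequence e s /\ (#|T|%:Z - k <= (size s)%:Z)%R).
  move=> [S [HS Hk]].
  have [s [Hs Hsz]] := forcing_gen Hsym Hirr Hconn x0 HS.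
  exists s; split => //; lia.
have CA : (exists s : seq T, generic_Z_sequence e s /\ (#|T|%:Z - k <= (size s)%:Z)%R) ->
          (exists s : seq T, GS_ordering e s /\ (#|F_leaves e s|%:Z <= k)%R).
  move=> [s [[Hu [t [Ht Hp]] Hg] Hk]].
  have Hb := leaves_bound Hsym Hirr Ht Hp Hu Hg.
  have Hb2 : (#|F_leaves e t| + size s <= #|T|)%N := Hb.
  exists t; split => //; lia.
split; split; tauto.
Qed.
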